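(* Let $(A,W)$ be a $T_1$ Pratt comonoid such that $W$ is closed under complementation (i.e., $x\in W$ implies $A-x\in W$). Then $(A,W)$ is discrete, i.e., $W$ is the set of all subsets of $A$.
   Context: A Pratt comonoid is a pair $(A,W)$ where $A$ is a set and $W$ is a set of subsets of $A$ such that (i) $\emptyset\in W$ and $A\in W$; (ii) whenever $C\subseteq A\times A$ is such that for every $a\in A$ both the $a$-th row $\{b\mid (a,b)\in C\}$ and the $a$-th column $\{b\mid (b,a)\in C\}$ belong to $W$ (such a $C$ is called a crossword over $W$), the diagonal $\{b\mid (b,b)\in C\}$ also belongs to $W$. $(A,W)$ is called $T_1$ if for all distinct $a,b\in A$ there is an element of $W$ containing $a$ but not $b$. It is called discrete if $W$ is the full power set of $A$. *)

(* Defs.v *)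
Definition crossword {A : Type} (W : (A -> Prop) -> Prop) (C : A -> A -> Prop) : Prop :=
  forall a : A, W (fun b => C a b) /\ W (fun b => C b a).

Definition pratt_comonoid (A : Type) (W : (A -> Prop) -> Prop) : Prop :=
  W (fun _ => False) /\ W (fun _ => True) /\
  (forall C : A -> A -> Prop, crossword W C -> W (fun b => C b b)).

Definition T1 {A : Type} (W : (A -> Prop) -> Prop) : Prop :=
  forall a b : A, a <> b -> exists x, W x /\ x a /\ ~ x b.

Definition closed_under_complement {A : Type} (W : (A -> Prop) -> Prop) : Prop :=
  forall x, W x -> W (fun a => ~ x a).

Definition discrete {A : Type} (W : (A -> Prop) -> Prop) : Prop :=
  forall x : A -> Prop, W x.

(* Main.v *)
Require Import Defs.
From Stdlib Require Import Classical ClassicalEpsilon FunctionalExtensionality PropExtensionality.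

Definition sub {A : Type} (U V : A -> Prop) := forall a, U a -> V a.

Inductive tower {A : Type} (nx : (A -> Prop) -> (A -> Prop)) : (A -> Prop) -> Prop :=
| tnext Y : tower nx Y -> tower nx (nx Y)
| tlim (F : (A -> Prop) -> Prop) :
    (forall Y, F Y -> tower nx Y) -> tower nx (fun a => forall Y, F Y -> Y a).

Lemma set_ext {A : Type} (U V : A -> Prop) : sub U V -> sub V U -> U = V.
Proof.
  intros H1 H2. apply functional_extensionality; intro a.
  apply propositional_extensionality; split; auto.
Qed.

Definition extreme {A : Type} nx (c : A -> Prop) :=
  forall x, tower nx x -> sub c x -> ~ sub x c -> sub c (nx x).

Lemma lemA {A : Type} nx (Hn : forall Y : A -> Prop, sub (nx Y) Y) c :
  extreme nx c -> forall x, tower nx x -> sub c x \/ sub x (nx c).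
Proof.
  intros Ec x Tx. induction Tx as [y Ty IH | F HF IH].
  - destruct IH as [H | H].
    + destruct (classic (sub y c)) as [H' | H'].
      * pose proof (set_ext _ _ H H') as E. subst y. right. intros a Ha; exact Ha.
      * left. exact (Ec y Ty H H').
    + right. intros a Ha. apply H. apply Hn. exact Ha.
  - destruct (classic (exists Y, F Y /\ sub Y (nx c))) as [[Y [FY HY]] | H].
    + right. intros a Ha. apply HY. apply Ha. exact FY.
    + left. intros a Ha Y FY. destruct (IH Y FY) as [H1 | H1].
      * apply H1; exact Ha.
      * exfalso; apply H; eauto.
Qed.

Lemma lemB {A : Type} nx (Hn : forall Y : A -> Prop, sub (nx Y) Y) c :
  tower nx c -> extreme nx c.
Proof.
  intro Tc. induction Tc as [d Td IH | F HF IH].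
  - intros x Tx H1 H2.
    destruct (lemA nx Hn d IH x Tx) as [H | H]; [| contradiction].
    destruct (classic (sub x d)) as [H' | H'].
    + pose proof (set_ext _ _ H H') as E. subst x. intros a Ha; exact Ha.
    + intros a Ha. apply (IH x Tx H H'). apply Hn. exact Ha.
  - intros x Tx H1 H2.
    apply not_all_ex_not in H2. destruct H2 as [b Hb].
    apply imply_to_and in Hb. destruct Hb as [Hxb Hcb].
    apply not_all_ex_not in Hcb. destruct Hcb as [Y HY].
    apply imply_to_and in HY. destruct HY as [FY HYb].
    destruct (lemA nx Hn Y (IH Y FY) x Tx) as [H | H].
    + assert (~ sub x Y) as H' by (intro H'; apply HYb, H', Hxb).
      intros a Ha. apply (IH Y FY x Tx H H'). apply Ha. exact FY.
    + exfalso. apply HYb. apply Hn. apply H. exact Hxb.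
Qed.

Lemma total {A : Type} nx (Hn : forall Y : A -> Prop, sub (nx Y) Y) c x :
  tower nx c -> tower nx x -> sub c x \/ sub x (nx c).
Proof. intros Tc Tx. exact (lemA nx Hn c (lemB nx Hn c Tc) x Tx). Qed.

Lemma W_ext {A : Type} (W : (A -> Prop) -> Prop) (X Y : A -> Prop) :
  W X -> (forall a, X a <-> Y a) -> W Y.
Proof.
  intros HX H. replace Y with X; auto.
  apply set_ext; intros a Ha; apply H; exact Ha.
Qed.

Lemma W_inter {A : Type} (W : (A -> Prop) -> Prop) (HP : pratt_comonoid A W) U V :
  W U -> W V -> W (fun a => U a /\ V a).
Proof.
  intros HU HV. destruct HP as [H0 [H1 H2]].
  apply (H2 (fun a b => U a /\ V b)). intro a. split.
  - destruct (classic (U a)).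
    + apply (W_ext W V); auto. intro b; tauto.
    + apply (W_ext W (fun _ => False)); auto. intro b; tauto.
  - destruct (classic (V a)).
    + apply (W_ext W U); auto. intro b; tauto.
    + apply (W_ext W (fun _ => False)); auto. intro b; tauto.
Qed.

Definition sP {A : Type} (W : (A -> Prop) -> Prop) (p : A) (Y : A -> Prop) (s : A -> Prop) :=
  W s /\ ~ s p /\ ((exists a, Y a /\ a <> p) -> exists a, Y a /\ s a).

Definition sY {A : Type} (W : (A -> Prop) -> Prop) (p : A) (Y : A -> Prop) : A -> Prop :=
  epsilon (inhabits (fun _ : A => False)) (sP W p Y).

Definition nxt {A : Type} (W : (A -> Prop) -> Prop) (p : A) (Y : A -> Prop) : A -> Prop :=
  fun b => Y b /\ ~ sY W p Y b.

Lemma sY_spec {A : Type} (W : (A -> Prop) -> Prop) (HP : pratt_comonoid A W) (HT : T1 W) p Y :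
  sP W p Y (sY W p Y).
Proof.
  unfold sY. apply epsilon_spec.
  destruct (classic (exists a, Y a /\ a <> p)) as [[a [Ya Hap]] | H].
  - destruct (HT a p Hap) as [x [Wx [xa xp]]]. exists x. split; [exact Wx|]. split; [exact xp|].
    intros _. exists a; auto.
  - exists (fun _ => False). destruct HP as [H0 _]. split; [exact H0|]. split; [auto|].
    intro H'; contradiction.
Qed.

Lemma nxt_sub {A : Type} (W : (A -> Prop) -> Prop) p Y : sub (nxt W p Y) Y.
Proof. intros a [Ha _]; exact Ha. Qed.

Lemma singleton_W {A : Type} (W : (A -> Prop) -> Prop)
  (HP : pratt_comonoid A W) (HT : T1 W) (HC : closed_under_complement W) (p : A) :
  W (fun b => b = p).
Proof.
  set (nx := nxt W p).
  assert (Hn : forall Y, sub (nx Y) Y) by (intro; apply nxt_sub).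
  assert (Tp : forall Y, tower nx Y -> Y p).
  { intros Y TY. induction TY as [y Ty IH | F HF IH].
    - split; [exact IH|]. destruct (sY_spec W HP HT p y) as [_ [H _]]. exact H.
    - intros Y FY. apply IH; exact FY. }
  assert (Fix : forall U, tower nx U -> sub U (nx U) -> forall a, U a -> a = p).
  { intros U TU HU a Ua. apply NNPP; intro Hap.
    destruct (sY_spec W HP HT p U) as [_ [_ H]].
    destruct (H (ex_intro _ a (conj Ua Hap))) as [a' [Ua' sa']].
    destruct (HU a' Ua') as [_ Hs]. contradiction. }
  assert (Wnx : forall U, W U -> W (fun b => U b /\ sY W p U b)).
  { intros U WU. apply W_inter; auto. destruct (sY_spec W HP HT p U) as [H _]; exact H. }
  assert (Q : forall Y, tower nx Y -> forall Z, tower nx Z -> sub Y Z -> W Z).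
  { intros Y TY. induction TY as [y Ty IH | F HF IH].
    - intros Z TZ HZ. destruct (total nx Hn y Z Ty TZ) as [H | H].
      + exact (IH Z TZ H).
      + replace Z with (nx y) by (apply set_ext; auto).
        unfold nx, nxt. apply W_inter; auto.
        * exact (IH y Ty (fun a h => h)).
        * apply HC. destruct (sY_spec W HP HT p y) as [H' _]; exact H'.
    - set (I := fun a => forall Y, F Y -> Y a).
      assert (TI : tower nx I) by (apply tlim; exact HF).
      intros Z TZ HZ.
      destruct (classic (exists Y, F Y /\ sub Y Z)) as [[Y [FY HY]] | Hno].
      { exact (IH Y FY Z TZ HY). }
      assert (EZ : Z = I).
      { apply set_ext; [| exact HZ]. intros a Za Y FY.
        destruct (total nx Hn Z Y TZ (HF Y FY)) as [H | H].
        - apply H; exact Za.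
        - exfalso. apply Hno. exists Y. split; [exact FY|].
          intros b Hb. apply Hn. apply H. exact Hb. }
      subst Z.
      set (R := fun a b => exists U, tower nx U /\ (exists Y, F Y /\ sub Y U /\ ~ sub U Y)
                  /\ U a /\ ~ nx U a /\ U b /\ ~ nx U b).
      assert (Row : forall a, W (fun b => R a b)).
      { intro a.
        destruct (classic (exists U, tower nx U /\ (exists Y, F Y /\ sub Y U /\ ~ sub U Y)
                  /\ U a /\ ~ nx U a)) as [[U [TU [[Y [FY [HYU HUY]]] [Ua nUa]]]] | Hno2].
        - apply (W_ext W (fun b => U b /\ sY W p U b)).
          + apply Wnx. exact (IH Y FY U TU HYU).
          + intro b. split.
            * intros [Ub sb]. exists U. repeat split; auto.
              { exists Y; auto. }
              intros [_ Hs]; contradiction.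
            * intros [U' [TU' [_ [Ua' [nUa' [Ub nUb]]]]]].
              assert (E : U = U').
              { apply set_ext.
                - destruct (total nx Hn U U' TU TU') as [H | H]; [exact H|].
                  exfalso; apply nUa; apply H; exact Ua'.
                - destruct (total nx Hn U' U TU' TU) as [H | H]; [exact H|].
                  exfalso; apply nUa'; apply H; exact Ua. }
              subst U'. split; [exact Ub|]. apply NNPP; intro hs. apply nUb. split; auto.
        - apply (W_ext W (fun _ => False)).
          + destruct HP as [H0 _]; exact H0.
          + intro b. split; [tauto|].
            intros [U [TU [HY [Ua [nUa _]]]]]. apply Hno2. exists U; auto. }
      assert (WD : W (fun b => R b b)).
      { destruct HP as [_ [_ H2]]. apply H2. intro a. split; [apply Row|].
        apply (W_ext W (fun b => R a b)); [apply Row|].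
        intro b; split; intros [U [h1 [h2 [h3 [h4 [h5 h6]]]]]]; exists U; repeat split; auto. }
      apply (W_ext W (fun a => ~ R a a)); [apply HC; exact WD|].
      intro a. split.
      + intros nR. apply NNPP; intro nI. apply nR.
        unfold I in nI. apply not_all_ex_not in nI. destruct nI as [Y HY].
        apply imply_to_and in HY. destruct HY as [FY nYa].
        set (U := fun b => forall V, (tower nx V /\ V a) -> V b).
        assert (TU : tower nx U) by (apply tlim; intros V [h _]; exact h).
        assert (Ua : U a) by (intros V [_ h]; exact h).
        assert (nUa : ~ nx U a).
        { intro h. assert (a = p).
          { apply (Fix U TU); [| exact Ua]. intros b Ub. apply Ub. split; [apply tnext; exact TU | exact h]. }
          subst a. apply nYa. apply Tp. apply HF. exact FY. }
        exists U. repeat split; auto.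
        exists Y. split; [exact FY|].
        destruct (total nx Hn U Y TU (HF Y FY)) as [H | H].
        * exfalso. apply nYa. apply H. exact Ua.
        * split.
          { intros b Hb. apply Hn. apply H. exact Hb. }
          intro H'. apply nYa. apply H'. exact Ua.
      + intros Ia [U [TU [[Y [FY [HYU HUY]]] [Ua [nUa _]]]]].
        destruct (total nx Hn U I TU TI) as [H | H].
        * apply HUY. intros b Hb. apply (H b Hb). exact FY.
        * apply nUa. apply H. exact Ia. }
  set (M := fun a => forall Y, tower nx Y -> Y a).
  assert (TM : tower nx M) by (apply tlim; auto).
  apply (W_ext W M).
  - exact (Q M TM M TM (fun a h => h)).
  - intro b. split.
    + intro Mb. apply (Fix M TM); [| exact Mb]. intros c Mc. apply Mc. apply tnext. exact TM.
    + intros E Y TY. subst b. apply Tp. exact TY.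
Qed.

Theorem theorem4p4 (A : Type) (W : (A -> Prop) -> Prop)
  (HP : pratt_comonoid A W) (HT : T1 W) (HC : closed_under_complement W) :
  discrete W.
Proof.
  intro x.
  pose proof HP as [H0 [_ H2]].
  apply (W_ext W (fun b => x b /\ b = b)).
  - apply (H2 (fun a b => x a /\ a = b)). intro a. split.
    + destruct (classic (x a)).
      * apply (W_ext W (fun b => b = a)); [apply singleton_W; auto|].
        intro b; split; [intro; subst; auto | intros [_ h]; auto].
      * apply (W_ext W (fun _ => False)); auto. intro b; tauto.
    + destruct (classic (x a)).
      * apply (W_ext W (fun b => b = a)); [apply singleton_W; auto|].
        intro b; split; [intro; subst; auto | intros [_ h]; auto].
      * apply (W_ext W (fun _ => False)); auto. intro b; split; [tauto|].
        intros [h e]; subst; contradiction.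
  - intro b; tauto.
Qed.
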